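(* Let $\Gamma$ be an alphabet and let $P_0,P_1,\dots,P_d$ be nonempty strings over $\Gamma$ such that $P_{j-1}$ is a prefix of $P_j$ for every $j\in\{1,\dots,d\}$. For a finite multiset $\mathcal{D}$ of strings over $\Gamma$ define \[ \Delta_{\mathcal{D}}=\big(\mathrm{freq}_{\mathcal{D}}(P_0),\ \mathrm{freq}_{\mathcal{D}}(P_1)-\mathrm{freq}_{\mathcal{D}}(P_0),\ \dots,\ \mathrm{freq}_{\mathcal{D}}(P_d)-\mathrm{freq}_{\mathcal{D}}(P_{d-1})\big)\in\mathbb{Z}^{d+1}. \] Let $S\in\mathcal{D}$, let $S'$ be any string over $\Gamma$, and let $\mathcal{D}'=(\mathcal{D}\setminus\{S\})\cup\{S'\}$ (one copy of $S$ replaced by $S'$). Then \[ \|\Delta_{\mathcal{D}}-\Delta_{\mathcal{D}'}\|_1\le 2\max\{\mathrm{freq}_S(P_0),\ \mathrm{freq}_{S'}(P_0)\}. \]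
   Context: For strings $P,S$, $\mathrm{freq}_S(P)$ is the number of positions $i$ with $S[i\ldots i+|P|-1]=P$, and for a multiset $\mathcal{D}$, $\mathrm{freq}_{\mathcal{D}}(P)=\sum_{S\in\mathcal{D}}\mathrm{freq}_S(P)$ (with multiplicity). In the paper, $P_0,\dots,P_d$ are the path labels of the nodes along a heavy path (from its head downward) in a trie-like candidate tree, so consecutive labels are prefixes of one another. *)

(* Defs.v *)
From mathcomp Require Import all_boot all_order all_algebra.
Set Implicit Arguments. Unset Strict Implicit. Unset Printing Implicit Defensive.
Import Order.TTheory GRing.Theory Num.Theory.
Local Open Scope ring_scope.

Definition freq (T : eqType) (S P : seq T) : nat :=
  count (fun i : nat => take (size P) (drop i S) == P) (iota 0 (size S).+1)%N.

Definition freqD (T : eqType) (D : seq (seq T)) (P : seq T) : nat :=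
  sumn (map (fun S => freq S P) D).

Definition Delta (T : eqType) (P : nat -> seq T) (D : seq (seq T)) (j : nat) : int :=
  if j == 0%N then (freqD D (P 0%N))%:Z
  else (freqD D (P j))%:Z - (freqD D (P j.-1))%:Z.

Definition Delta_dist (T : eqType) (d : nat) (P : nat -> seq T)
  (D D' : seq (seq T)) : int :=
  \sum_(j < d.+1) `|Delta P D j - Delta P D' j|.

(* Main.v *)
Require Import Defs.
From mathcomp Require Import all_boot all_order all_algebra.
From mathcomp Require Import zify ring lra.
Import Order.TTheory GRing.Theory Num.Theory.
Local Open Scope ring_scope.

Lemma freq_mono (T : eqType) (S p q : seq T) :
  prefix p q -> (freq S q <= freq S p)%N.
Proof.
move=> /prefixP [r ->]; rewrite /freq; apply: sub_count => i /= /eqP H.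
have : take (size p) (take (size (p ++ r)) (drop i S)) = p by rewrite H take_size_cat.
by rewrite take_takel ?size_cat ?leq_addr // => ->.
Qed.

Lemma freqD_rep (T : eqType) (D : seq (seq T)) (S S' P : seq T) :
  S \in D ->
  (freqD (S' :: rem S D) P)%:Z = (freqD D P)%:Z - (freq S P)%:Z + (freq S' P)%:Z.
Proof.
move=> hS; have pe := perm_to_rem hS.
rewrite /freqD (perm_sumn (perm_map _ pe)) /= !PoszD; ring.
Qed.

Lemma tele (x y : nat -> int) (d : nat) :
  (forall j, (0 < j <= d)%N -> x j <= x j.-1) ->
  (forall j, (0 < j <= d)%N -> y j <= y j.-1) ->
  \sum_(j < d.+1) `|(if (j : nat) == 0%N then x 0%N - y 0%N
                    else (x j - x j.-1) - (y j - y j.-1))|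
  <= `|x 0%N - y 0%N| + (x 0%N - x d) + (y 0%N - y d).
Proof.
elim: d => [|d IH] hx hy.
  by rewrite big_ord_recr big_ord0 /= add0r !subrr !addr0.
rewrite big_ord_recr /=.
have h1 := hx d.+1 ltac:(by rewrite ltn0Sn leqnn).
have h2 := hy d.+1 ltac:(by rewrite ltn0Sn leqnn).
have IH' : \sum_(j < d.+1)
     `|if (j : nat) == 0%N then x 0%N - y 0%N else x j - x j.-1 - (y j - y j.-1)| <=
  `|x 0%N - y 0%N| + (x 0%N - x d) + (y 0%N - y d).
  apply: IH => j /andP[a b]; [apply: hx|apply: hy]; by rewrite a leqW.
rewrite /= in h1 h2.
apply: le_trans (lerD IH' (ler_normB _ _)) _.
rewrite (ler0_norm (x := x d.+1 - x d)) ?subr_le0 // (ler0_norm (x := y d.+1 - y d)) ?subr_le0 //. lra.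
Qed.

Theorem mainTheorem3 (T : eqType) (d : nat) (P : nat -> seq T)
  (hne : forall j : nat, (j <= d)%N -> P j != [::])
  (hpre : forall j : nat, (0 < j <= d)%N -> prefix (P j.-1) (P j))
  (D : seq (seq T)) (S S' : seq T) (hS : S \in D) :
  Delta_dist d P D (S' :: rem S D)
    <= 2 * (maxn (freq S (P 0%N)) (freq S' (P 0%N)))%:Z.
Proof.
pose x j := (freq S (P j))%:Z. pose y j := (freq S' (P j))%:Z.
have E : Delta_dist d P D (S' :: rem S D) =
  \sum_(j < d.+1) `|(if (j : nat) == 0%N then x 0%N - y 0%N
                    else (x j - x j.-1) - (y j - y j.-1))|.
  rewrite /Delta_dist; apply: eq_bigr => j _; rewrite /Delta.
  case: eqP => _; rewrite !freqD_rep // /x /y; congr `|_|; ring.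
have Tl := @tele x y d
  (fun j hj => @freq_mono _ S _ _ (hpre j hj)) (fun j hj => @freq_mono _ S' _ _ (hpre j hj)).
rewrite E; apply: le_trans Tl _.
have xd : 0 <= x d by [].
have yd : 0 <= y d by [].
have [M1 M2] : x 0%N <= (maxn (freq S (P 0%N)) (freq S' (P 0%N)))%:Z /\
   y 0%N <= (maxn (freq S (P 0%N)) (freq S' (P 0%N)))%:Z.
  by rewrite /x /y !lez_nat leq_maxl leq_maxr.
have M3 : (maxn (freq S (P 0%N)) (freq S' (P 0%N)))%:Z = x 0%N \/
          (maxn (freq S (P 0%N)) (freq S' (P 0%N)))%:Z = y 0%N.
  rewrite /x /y; case: (leqP (freq S (P 0%N)) (freq S' (P 0%N))) => h.
  - by right; lia.
  - by left; lia.
move: M1 M2 M3; set m := (maxn _ _)%:Z => M1 M2 M3.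
case: (lerP 0 (x 0%N - y 0%N)) => hs; [rewrite ger0_norm // | rewrite ltr0_norm //];
  case: M3 => M3; lra.
Qed.
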